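(* Let $\rho : \mathfrak g \to \mathrm{End}(W)$ be a finite-dimensional representation of a complex semisimple Lie algebra $\mathfrak g$, and $\mathfrak h$ a Cartan subalgebra. Let $\lambda$ be a weight of $\mathfrak h$ in $W$ and $W_\lambda = \{w \in W : Hw = \lambda(H) w \ \forall H \in \mathfrak h\}$. If there exists a co-root $H_\alpha$ such that $\lambda(H_\alpha)$ is an even nonzero integer, then $W_\lambda \otimes \mathfrak h$ is contained in the $\mathfrak g$-submodule of $W \otimes \mathfrak g$ generated by the $\mathfrak g$-overshears.
   Context: $W \otimes \mathfrak g$ is a $\mathfrak g$-module via $(\rho\otimes \mathrm{ad})(\xi)(w\otimes \eta) = \rho(\xi)w \otimes \eta + w \otimes [\xi,\eta]$. An element $w \otimes \xi$ ($w\in W$, $\xi \in \mathfrak g$) is a $\mathfrak g$-overshear if $\rho(\xi)^2 w = 0$. For a root $\alpha$, $H_\alpha\in\mathfrak h$ is the co-root, i.e. there are $E_\alpha \in \mathfrak g_\alpha$, $F_\alpha\in\mathfrak g_{-\alpha}$ with $[H_\alpha,E_\alpha]=2E_\alpha$, $[H_\alpha,F_\alpha]=-2F_\alpha$, $[E_\alpha,F_\alpha]=H_\alpha$. *)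

(* Defs.v *)
(* Lie algebra g realized on the column space 'cV[F]_n with a
   bracket br, representation space W = 'cV[F]_m, rho : 'cV_n -> 'M_m, and
   W (x) g realized as 'M[F]_(m,n) with  w (x) xi := w *m xi^T. *)
From HB Require Import structures.
From mathcomp Require Import all_boot all_order all_algebra.
Set Implicit Arguments. Unset Strict Implicit. Unset Printing Implicit Defensive.
Import Order.TTheory GRing.Theory Num.Theory.
Local Open Scope ring_scope.

Section LieDefs.
Variable F : fieldType.
Variable n : nat.
Local Notation g := 'cV[F]_n.
Variable br : g -> g -> g.

Definition is_lie : Prop :=
  [/\ forall (a : F) (x y z : g), br (a *: x + y) z = a *: br x z + br y z,
      forall (a : F) (x y z : g), br x (a *: y + z) = a *: br x y + br x z,
      forall x : g, br x x = 0
    & forall x y z : g, br x (br y z) + br y (br z x) + br z (br x y) = 0].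

Definition lie_brs (U V : {vspace g}) : {vspace g} :=
  <<[seq br u v | u <- vbasis U, v <- vbasis V]>>%VS.

Definition lie_ideal (I : {vspace g}) : Prop := (lie_brs fullv I <= I)%VS.
Definition lie_subalg (h : {vspace g}) : Prop := (lie_brs h h <= h)%VS.

Definition derived_series (U : {vspace g}) (k : nat) : {vspace g} :=
  iter k (fun V => lie_brs V V) U.
Definition lie_solvable (U : {vspace g}) : Prop :=
  exists k, derived_series U k = 0%VS.

Definition lower_central (U : {vspace g}) (k : nat) : {vspace g} :=
  iter k (fun V => lie_brs U V) U.
Definition lie_nilpotent (U : {vspace g}) : Prop :=
  exists k, lower_central U k = 0%VS.

Definition semisimple : Prop :=
  forall I : {vspace g}, lie_ideal I -> lie_solvable I -> I = 0%VS.

Definition cartan (h : {vspace g}) : Prop :=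
  [/\ lie_subalg h, lie_nilpotent h &
      forall x : g, (forall y, y \in h -> br x y \in h) -> x \in h].

(* root spaces, roots, co-roots (functionals on h given as functions g -> F,
   only their values on h matter) *)
Definition root_space (h : {vspace g}) (al : g -> F) (x : g) : Prop :=
  forall H, H \in h -> br H x = al H *: x.

Definition is_root (h : {vspace g}) (al : g -> F) : Prop :=
  (exists2 H, H \in h & al H != 0) /\ exists2 x, x != 0 & root_space h al x.

Definition is_coroot (h : {vspace g}) (H : g) : Prop :=
  exists al : g -> F, [/\ is_root h al, H \in h &
    exists E Fa : g, [/\ root_space h al E, root_space h (fun y => - al y) Fa,
       br H E = 2%:R *: E, br H Fa = - (2%:R *: Fa) & br E Fa = H]].

Variable m : nat.
Local Notation W := 'cV[F]_m.
Variable rho : g -> 'M[F]_m.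

Definition is_rep : Prop :=
  [/\ forall (a : F) (x y : g), rho (a *: x + y) = a *: rho x + rho y
    & forall x y : g, rho (br x y) = rho x *m rho y - rho y *m rho x].

Definition tens (w : W) (xi : g) : 'M[F]_(m, n) := w *m xi^T.

(* (rho (x) ad)(x), the linear extension of
   w (x) eta |-> rho(x) w (x) eta + w (x) [x, eta] *)
Definition tens_act (x : g) (T : 'M[F]_(m, n)) : 'M[F]_(m, n) :=
  rho x *m T + \sum_(j < n) tens (col j T) (br x (delta_mx j 0)).

Definition overshear (w : W) (xi : g) : Prop := (rho xi ^+ 2) *m w = 0.

Definition in_overshear_submod (T : 'M[F]_(m, n)) : Prop :=
  forall S : {vspace 'M[F]_(m, n)},
    (forall w xi, overshear w xi -> tens w xi \in S) ->
    (forall x U, U \in S -> tens_act x U \in S) ->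
    T \in S.

Definition weight_space (h : {vspace g}) (lam : g -> F) (w : W) : Prop :=
  forall H, H \in h -> rho H *m w = lam H *: w.

Definition is_weight (h : {vspace g}) (lam : g -> F) : Prop :=
  exists2 w, w != 0 & weight_space h lam w.

End LieDefs.

(* Main.v *)
Require Import Defs.
From HB Require Import structures.
From mathcomp Require Import all_boot all_order all_algebra ring zify.
Set Implicit Arguments. Unset Strict Implicit. Unset Printing Implicit Defensive.
Import Order.TTheory GRing.Theory Num.Theory.
Local Open Scope ring_scope.

Section Basics.
Variables (F : numClosedFieldType) (n m : nat).
Variables (br : 'cV[F]_n -> 'cV[F]_n -> 'cV[F]_n) (rho : 'cV[F]_n -> 'M[F]_m).
Hypotheses (hlie : is_lie br) (hrep : is_rep br rho).

Lemma dbl0 (V : zmodType) (x : V) : x = x + x -> x = 0.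
Proof. by move/(congr1 (fun t => t - x)); rewrite subrr addrK => ->. Qed.

Lemma br0l z : br 0 z = 0.
Proof.
case: hlie => h1 _ _ _; have := h1 1 0 0 z; rewrite !scale1r !addr0.
exact: dbl0.
Qed.
Lemma br0r z : br z 0 = 0.
Proof.
case: hlie => _ h1 _ _; have := h1 1 z 0 0; rewrite !scale1r !addr0.
exact: dbl0.
Qed.
Lemma brDl x y z : br (x + y) z = br x z + br y z.
Proof. by case: hlie => h1 _ _ _; have := h1 1 x y z; rewrite !scale1r. Qed.
Lemma brZl a x z : br (a *: x) z = a *: br x z.
Proof. by case: hlie => h1 _ _ _; have := h1 a x 0 z; rewrite !addr0 br0l addr0. Qed.
Lemma brDr x y z : br z (x + y) = br z x + br z y.
Proof. by case: hlie => _ h1 _ _; have := h1 1 z x y; rewrite !scale1r. Qed.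
Lemma brZr a x z : br z (a *: x) = a *: br z x.
Proof. by case: hlie => _ h1 _ _; have := h1 a z x 0; rewrite !addr0 br0r addr0. Qed.
Lemma brNl x z : br (- x) z = - br x z.
Proof. by rewrite -scaleN1r brZl scaleN1r. Qed.
Lemma brNr x z : br z (- x) = - br z x.
Proof. by rewrite -scaleN1r brZr scaleN1r. Qed.
Lemma br_anti x y : br y x = - br x y.
Proof.
case: hlie => _ _ h3 _; have := h3 (x + y).
rewrite brDl !brDr !h3 add0r addr0 => /eqP; rewrite addr_eq0 => /eqP ->.
by rewrite opprK.
Qed.
Lemma br_sum x (I : finType) (c : I -> F) (d : I -> 'cV[F]_n) :
  br x (\sum_i c i *: d i) = \sum_i c i *: br x (d i).
Proof.
apply: (big_ind2 (fun a b => br x a = b)); first by rewrite br0r.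
  by move=> ? ? ? ? <- <-; rewrite brDr.
by move=> i _; rewrite brZr.
Qed.

Lemma rho0 : rho 0 = 0.
Proof.
case: hrep => h1 _; have := h1 1 0 0; rewrite !scale1r !addr0.
exact: dbl0.
Qed.
Lemma rhoD x y : rho (x + y) = rho x + rho y.
Proof. by case: hrep => h1 _; have := h1 1 x y; rewrite !scale1r. Qed.
Lemma rhoZ a x : rho (a *: x) = a *: rho x.
Proof. by case: hrep => h1 _; have := h1 a x 0; rewrite !addr0 rho0 addr0. Qed.
Lemma rhoN x : rho (- x) = - rho x.
Proof. by rewrite -scaleN1r rhoZ scaleN1r. Qed.
Lemma rhoB x y : rho (x - y) = rho x - rho y.
Proof. by rewrite rhoD rhoN. Qed.
Lemma rho_br x y (v : 'cV[F]_m) : rho (br x y) *m v = rho x *m (rho y *m v) - rho y *m (rho x *m v).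
Proof. by case: hrep => _ ->; rewrite mulmxBl !mulmxA. Qed.

Lemma tensDl (v v' : 'cV[F]_m) (X : 'cV[F]_n) : tens (v + v') X = tens v X + tens v' X.
Proof. by rewrite /tens mulmxDl. Qed.
Lemma tensZl a (v : 'cV[F]_m) (X : 'cV[F]_n) : tens (a *: v) X = a *: tens v X.
Proof. by rewrite /tens scalemxAl. Qed.
Lemma tensDr (v : 'cV[F]_m) (X Y : 'cV[F]_n) : tens v (X + Y) = tens v X + tens v Y.
Proof. by rewrite /tens linearD /= mulmxDr. Qed.
Lemma tensZr a (v : 'cV[F]_m) (X : 'cV[F]_n) : tens v (a *: X) = a *: tens v X.
Proof. by rewrite /tens linearZ /= scalemxAr. Qed.
Lemma tensNl (v : 'cV[F]_m) (X : 'cV[F]_n) : tens (- v) X = - tens v X.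
Proof. by rewrite -scaleN1r tensZl scaleN1r. Qed.
Lemma tensNr (v : 'cV[F]_m) (X : 'cV[F]_n) : tens v (- X) = - tens v X.
Proof. by rewrite -scaleN1r tensZr scaleN1r. Qed.
Lemma tens0l (X : 'cV[F]_n) : tens (0 : 'cV[F]_m) X = 0.
Proof. by rewrite /tens mul0mx. Qed.
Lemma tens0r (v : 'cV[F]_m) : tens v (0 : 'cV[F]_n) = 0.
Proof. by rewrite /tens trmx0 mulmx0. Qed.

Lemma tens_actE x (v : 'cV[F]_m) (X : 'cV[F]_n) :
  tens_act br rho x (tens v X) = tens (rho x *m v) X + tens v (br x X).
Proof.
rewrite /tens_act {1}/tens mulmxA; congr (_ + _).
have eX : X = \sum_(j < n) X j 0 *: delta_mx j 0.
  by rewrite {1}(matrix_sum_delta X); apply: eq_bigr => i _; rewrite big_ord1.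
rewrite [in RHS]eX.
rewrite (br_sum x (fun j => X j 0) (fun j => delta_mx j 0)).
have -> : forall (Y : 'I_n -> 'cV[F]_n),
  tens v (\sum_j Y j) = \sum_j tens v (Y j).
  move=> Y; apply: (big_ind2 (fun a b => tens v a = b)); first by rewrite tens0r.
    by move=> ? ? ? ? <- <-; rewrite tensDr.
  by [].
apply: eq_bigr => j _; rewrite tensZr -tensZl; congr tens.
apply/matrixP => i l; rewrite !mxE big_ord1 !mxE (ord1 l) mulrC.
done.
Qed.
End Basics.

Definition epow (F : fieldType) (m : nat) (A : 'M[F]_m) j (v : 'cV[F]_m) :=
  iter j (mulmx A) v.

Lemma epow0 (F : fieldType) (m : nat) (A : 'M[F]_m) j : epow A j 0 = 0.
Proof. by elim: j => //= j IH; rewrite /epow /= -/(epow A j 0) IH mulmx0. Qed.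
Lemma epowZ (F : fieldType) (m : nat) (A : 'M[F]_m) j c v :
  epow A j (c *: v) = c *: epow A j v.
Proof. by elim: j => //= j IH; rewrite /epow /= -!/(epow A j _) IH scalemxAr. Qed.
Lemma epowS (F : fieldType) (m : nat) (A : 'M[F]_m) j v :
  epow A j.+1 v = A *m epow A j v.
Proof. by []. Qed.
Lemma epowSr (F : fieldType) (m : nat) (A : 'M[F]_m) j v :
  epow A j.+1 v = epow A j (A *m v).
Proof. by rewrite /epow iterSr. Qed.
Lemma epowD (F : fieldType) (m : nat) (A : 'M[F]_m) i j v :
  epow A (i + j) v = epow A i (epow A j v).
Proof. by rewrite /epow iterD. Qed.

Fixpoint acoef (F : fieldType) (mu : F) (i : nat) : F :=
  if i is i'.+1 then - acoef mu i' / ((i'.+1)%:R * (mu + (i'.+2)%:R)) else 1.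

Section SL2.
Variables (F : numClosedFieldType) (n m : nat).
Variables (br : 'cV[F]_n -> 'cV[F]_n -> 'cV[F]_n) (rho : 'cV[F]_n -> 'M[F]_m).
Hypotheses (hlie : is_lie br) (hrep : is_rep br rho).
Variables (E Fa Hh : 'cV[F]_n).
Hypotheses (hHE : br Hh E = 2%:R *: E) (hHF : br Hh Fa = - (2%:R *: Fa))
  (hEF : br E Fa = Hh).

Local Notation e := (rho E).
Local Notation f := (rho Fa).
Local Notation hm := (rho Hh).

Lemma c_ef (v : 'cV[F]_m) : e *m (f *m v) = f *m (e *m v) + hm *m v.
Proof. by rewrite -hEF (rho_br hrep) addrC subrK. Qed.
Lemma c_he (v : 'cV[F]_m) : hm *m (e *m v) = e *m (hm *m v) + 2%:R *: (e *m v).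
Proof.
have := rho_br hrep Hh E v; rewrite hHE (rhoZ hrep) -scalemxAl => eq.
by rewrite -[LHS](subrK (e *m (hm *m v))) -eq addrC.
Qed.
Lemma c_hf (v : 'cV[F]_m) : hm *m (f *m v) = f *m (hm *m v) - 2%:R *: (f *m v).
Proof.
have := rho_br hrep Hh Fa v; rewrite hHF (rhoN hrep) (rhoZ hrep) mulNmx -scalemxAl => eq.
by rewrite -[LHS](subrK (f *m (hm *m v))) -eq addrC.
Qed.

Lemma wt_e (v : 'cV[F]_m) mu j : hm *m v = mu *: v ->
  hm *m epow e j v = (mu + (2 * j)%:R) *: epow e j v.
Proof.
move=> hv; elim: j => [|j IH]; first by rewrite muln0 addr0.
rewrite epowS c_he IH -scalemxAr -scalerDl; congr (_ *: _); ring.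
Qed.
Lemma wt_f (v : 'cV[F]_m) mu j : hm *m v = mu *: v ->
  hm *m epow f j v = (mu - (2 * j)%:R) *: epow f j v.
Proof.
move=> hv; elim: j => [|j IH]; first by rewrite muln0 subr0.
rewrite epowS c_hf IH -scalemxAr -scalerBl; congr (_ *: _); ring.
Qed.
Lemma ef_comm (x : 'cV[F]_m) nu i : hm *m x = nu *: x ->
  e *m epow f i.+1 x = epow f i.+1 (e *m x) + ((i.+1)%:R * (nu - i%:R)) *: epow f i x.
Proof.
move=> hx; elim: i => [|i IH].
  by rewrite /= c_ef hx mul1r subr0.
rewrite [epow f i.+2 x]epowS c_ef IH (wt_f _ hx) mulmxDr -scalemxAr.
rewrite -epowS -addrA -scalerDl; congr (_ + _ *: _); ring.
Qed.
Lemma enil_f_aux (y : 'cV[F]_m) nu M : hm *m y = nu *: y ->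
  exists c, epow e M.+1 (f *m y) = f *m epow e M.+1 y + c *: epow e M y.
Proof.
move=> hy; elim: M => [|M [c IH]].
  by exists nu; rewrite /= c_ef hy.
exists (nu + (2 * M.+1)%:R + c).
rewrite epowS IH mulmxDr c_ef (wt_e _ hy) -scalemxAr -epowS -addrA.
by rewrite -scalerDl.
Qed.
Lemma enil_f (y : 'cV[F]_m) nu M : hm *m y = nu *: y -> epow e M y = 0 ->
  epow e M.+1 (f *m y) = 0.
Proof.
move=> hy h0; have [c ->] := enil_f_aux M hy.
by rewrite epowS h0 !mulmx0 scaler0 addr0.
Qed.
Lemma enil_fi (y : 'cV[F]_m) nu M i : hm *m y = nu *: y -> epow e M y = 0 ->
  epow e (M + i) (epow f i y) = 0.
Proof.
move=> hy h0; elim: i => [|i IH]; first by rewrite addn0.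
rewrite addnS epowS; exact: (enil_f (wt_f _ hy) IH).
Qed.

Variable S : {vspace 'M[F]_(m, n)}.
Hypotheses (hS1 : forall w xi, overshear rho w xi -> tens w xi \in S)
  (hS2 : forall x U, U \in S -> tens_act br rho x U \in S).

Lemma actT x (v : 'cV[F]_m) X :
  tens_act br rho x (tens v X) = tens (rho x *m v) X + tens v (br x X).
Proof. exact: tens_actE. Qed.
Lemma act_lin x (A B : 'M[F]_(m, n)) c :
  tens_act br rho x (A - c *: B) = tens_act br rho x A - c *: tens_act br rho x B.
Proof.
rewrite /tens_act mulmxBr -scalemxAr scalerDr opprD addrACA; congr (_ + _).
rewrite scaler_sumr -sumrN -big_split /=; apply: eq_bigr => j _.
have -> : col j (A - c *: B) = col j A - c *: col j B.
  by apply/matrixP => a b; rewrite !mxE.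
by rewrite tensDl tensNl tensZl.
Qed.
Lemma brEH : br E Hh = - (2%:R *: E). Proof. by rewrite (br_anti hlie) hHE. Qed.
Lemma brFH : br Fa Hh = 2%:R *: Fa. Proof. by rewrite (br_anti hlie) hHF opprK. Qed.
Lemma brFE : br Fa E = - Hh. Proof. by rewrite (br_anti hlie) hEF. Qed.
Lemma brxx x : br x x = 0. Proof. by case: hlie. Qed.

Lemma osh (v : 'cV[F]_m) X : rho X *m (rho X *m v) = 0 -> tens v X \in S.
Proof. by move=> h; apply: hS1; rewrite /overshear expr2 -mulmxE mulmxA in h *. Qed.

Lemma Eiter (z : 'cV[F]_m) j : tens z Hh \in S ->
  tens (epow e j.+1 z) Hh - (2 * j.+1)%:R *: tens (epow e j z) E \in S.
Proof.
move=> hz; elim: j => [|j IH].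
  have := hS2 E hz; rewrite actT brEH tensNr tensZr /=.
  by rewrite muln1.
have := hS2 E IH; rewrite act_lin !actT brEH brxx tens0r addr0 tensNr tensZr.
rewrite -epowS -addrA -opprD -scalerDl.
suff -> : (2%:R + (2 * j.+1)%:R : F) = (2 * j.+2)%:R by [].
ring.
Qed.

Lemma memvZV (T : 'M[F]_(m, n)) (c : F) : c != 0 -> c *: T \in S -> T \in S.
Proof. by move=> c0 /(memvZ c^-1); rewrite scalerA mulVf // scale1r. Qed.

Lemma comb (V : lmodType F) (t1 t2 : V) a b :
  a *: t1 - b *: t2 + b *: (t2 - t1) = (a - b) *: t1.
Proof. by rewrite scalerBr addrA subrK scalerBl. Qed.

Lemma epf (v0 : 'cV[F]_m) K : e *m v0 = 0 -> hm *m v0 = (2 * K)%:R *: v0 ->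
  forall j l, (j + l <= 2 * K)%N ->
  exists2 a : F, a != 0 & epow e j (epow f (j + l) v0) = a *: epow f l v0.
Proof.
move=> he hw; elim=> [|j IH] l hjl; first by exists 1; rewrite ?oner_eq0 ?scale1r.
have [a a0 IHa] := IH l (ltnW hjl).
exists ((j + l).+1%:R * ((2 * K)%:R - (j + l)%:R) * a).
  rewrite !mulf_neq0 // ?pnatr_eq0 // -natrB ?(ltnW hjl) // pnatr_eq0 subn_eq0 -ltnNge //.
rewrite addSn epowSr (ef_comm _ hw) he epow0 add0r epowZ IHa scalerA //.
Qed.

Lemma HW (v0 : 'cV[F]_m) k : e *m v0 = 0 -> hm *m v0 = (2 * k.+1)%:R *: v0 ->
  tens v0 Hh \in S /\ tens v0 Fa \in S.
Proof.
move=> he hw.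
have efv : e *m (f *m v0) = (2 * k.+1)%:R *: v0 by rewrite c_ef he mulmx0 add0r hw.
have fvE : tens (f *m v0) E \in S.
  by apply: osh; rewrite efv -scalemxAr he scaler0.
have fvH : tens (f *m v0) Hh \in S.
  case: k hw efv => [|p] hw efv.
    apply: osh; have := wt_f 1 hw; rewrite /= subrr scale0r => ->.
    by rewrite mulmx0.
  set z := epow f p.+2 v0.
  have hz : tens z Hh \in S.
    by apply: osh; rewrite (wt_f _ hw) subrr scale0r mulmx0.
  have hT1 := Eiter p hz.
  have hle : (p + 2 <= 2 * p.+2)%N by lia.
  have [a a0 ez] := epf he hw hle.
  rewrite addn2 -/z in ez.
  have ez1 : epow e p.+1 z = (a * (2%:R * ((2 * p.+2)%:R - 1))) *: (f *m v0).
    by rewrite epowS ez -scalemxAr (ef_comm _ hw) he epow0 add0r scalerA.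
  rewrite ez ez1 !tensZl scalerA in hT1.
  have hb : tens (epow f 2 v0) E - tens (f *m v0) Hh \in S.
    by have := hS2 Fa fvE; rewrite actT brFE tensNr.
  have := memvD hT1 (memvZ ((2 * p.+1)%:R * a) hb); rewrite comb.
  apply: memvZV; rewrite [_ * a]mulrC -mulrBr mulf_neq0 //.
  suff -> : (2%:R * ((2 * p.+2)%:R - 1) - (2 * p.+1)%:R : F) = (2 * p.+2)%:R.
    by rewrite pnatr_eq0.
  ring.
have v0H : tens v0 Hh \in S.
  have := memvD (hS2 E fvH) (memvZ 2%:R fvE).
  rewrite actT efv brEH tensNr tensZr tensZl subrK.
  by apply: memvZV; rewrite pnatr_eq0.
split=> //.
have := memvB (hS2 Fa v0H) fvH; rewrite actT brFH tensZr addrC addKr.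
by apply: memvZV; rewrite pnatr_eq0.
Qed.

Definition Rp (v : 'cV[F]_m) := (tens v Hh \in S) && (tens v Fa \in S).

Lemma Rp0 : Rp 0. Proof. by rewrite /Rp !tens0l mem0v. Qed.
Lemma RpD x y : Rp x -> Rp y -> Rp (x + y).
Proof. by move=> /andP[??] /andP[??]; rewrite /Rp !tensDl !memvD. Qed.
Lemma RpZ c x : Rp x -> Rp (c *: x).
Proof. by move=> /andP[??]; rewrite /Rp !tensZl !memvZ. Qed.
Lemma RpB x y : Rp x -> Rp y -> Rp (x - y).
Proof. by move=> ? ?; rewrite -scaleN1r; apply: RpD => //; apply: RpZ. Qed.
Lemma Rp_f x : Rp x -> Rp (f *m x).
Proof.
move=> /andP[h1 h2]; apply/andP; split.
  have := memvB (hS2 Fa h1) (memvZ 2%:R h2).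
  by rewrite actT brFH tensZr addrK.
by have := hS2 Fa h2; rewrite actT brxx tens0r addr0.
Qed.
Lemma Rp_sum (I : finType) (P : pred I) (G : I -> 'cV[F]_m) :
  (forall i, P i -> Rp (G i)) -> Rp (\sum_(i | P i) G i).
Proof. by move=> h; apply: (big_ind Rp Rp0 RpD). Qed.

Lemma tele (v : 'cV[F]_m) k M : hm *m v = (2 * k.+1)%:R *: v ->
  e *m (\sum_(i < M.+1) acoef (2 * k.+1)%:R i *: epow f i (epow e i v))
  = acoef (2 * k.+1)%:R M *: epow f M (epow e M.+1 v).
Proof.
move=> hv; elim: M => [|M IH]; first by rewrite big_ord1 /= !scale1r.
rewrite big_ord_recr /= mulmxDr IH -scalemxAr.
rewrite (ef_comm _ (wt_e M.+1 hv)) -epowS scalerDr scalerA addrCA -scalerDl.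
set mu := ((2 * k.+1)%:R : F).
have d0 : ((M.+1)%:R * (mu + (M.+2)%:R)) != 0 :> F.
  by rewrite /mu -natrD -natrM pnatr_eq0 muln_eq0 addnS.
suff -> : acoef mu M + acoef mu M.+1 * ((M.+1)%:R * (mu + (2 * M.+1)%:R - M%:R)) = 0.
  by rewrite scale0r addr0.
have -> : (mu + (2 * M.+1)%:R - M%:R) = mu + (M.+2)%:R by ring.
by rewrite /= divfK // addrN.
Qed.

Lemma mainP N : forall (v : 'cV[F]_m) k, hm *m v = (2 * k.+1)%:R *: v ->
  epow e N v = 0 -> Rp v.
Proof.
elim: N => [|N IH] v k hv hN; first by rewrite /= in hN; rewrite hN Rp0.
set mu := ((2 * k.+1)%:R : F).
set v0 := \sum_(i < N.+1) acoef mu i *: epow f i (epow e i v).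
have hv0e : e *m v0 = 0 by rewrite tele // hN epow0 scaler0.
have hv0w : hm *m v0 = mu *: v0.
  rewrite mulmx_sumr scaler_sumr; apply: eq_bigr => i _.
  by rewrite -scalemxAr (wt_f _ (wt_e _ hv)) addrK scalerA mulrC -scalerA.
have [h1 h2] := HW hv0e hv0w.
have Rv0 : Rp v0 by apply/andP.
have -> : v = v0 - \sum_(i < N) acoef mu i.+1 *: epow f i.+1 (epow e i.+1 v).
  by rewrite /v0 big_ord_recl /= scale1r addrK.
apply: RpB => //; apply: Rp_sum => i _; apply: RpZ; rewrite epowS; apply: Rp_f.
apply: (IH _ k.+1).
  rewrite (wt_f _ (wt_e _ hv)); congr (_ *: _); rewrite /mu; ring.
have hi := ltn_ord i.
have h0 : epow e (N - i) (epow e i.+1 v) = 0.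
  by rewrite -epowD; have -> : (N - i + i.+1 = N.+1)%N by lia.
have := @enil_fi _ _ (N - i) i (wt_e i.+1 hv) h0.
by rewrite subnK // ltnW.
Qed.

Lemma nilp (w : 'cV[F]_m) mu : hm *m w = mu *: w -> epow e m w = 0.
Proof.
move=> hw; apply/eqP/negPn/negP => hne.
have nz j : (j <= m)%N -> epow e j w != 0.
  move=> hj; apply: contra hne => /eqP h0.
  have -> : epow e m w = epow e (m - j) (epow e j w) by rewrite -epowD subnK.
  by rewrite h0 epow0.
set rs := [seq mu + (2 * j)%:R | j <- iota 0 m.+1].
have hroot : all (root (char_poly hm^T)) rs.
  apply/allP => x /mapP [j]; rewrite mem_iota add0n => /andP[_ hj] ->.
  rewrite -eigenvalue_root_char; apply/eigenvalueP; exists (epow e j w)^T.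
    by rewrite -trmx_mul (wt_e _ hw) linearZ.
  by rewrite trmx_eq0 nz.
have huniq : uniq rs.
  rewrite map_inj_uniq ?iota_uniq // => i j /addrI /eqP; rewrite eqr_nat => /eqP.
  lia.
have := max_poly_roots (monic_neq0 (char_poly_monic _)) hroot huniq.
by rewrite size_map size_iota size_char_poly ltnn.
Qed.

Lemma sl2_main (w : 'cV[F]_m) k : hm *m w = (2 * k.+1)%:R *: w -> tens w Hh \in S.
Proof. by move=> hw; have /andP[] := @mainP m w k hw (nilp hw). Qed.
End SL2.

Unset Implicit Arguments.
Set Strict Implicit.

Theorem lemma3p9 (F : numClosedFieldType) (n m : nat)
  (br : 'cV[F]_n -> 'cV[F]_n -> 'cV[F]_n) (rho : 'cV[F]_n -> 'M[F]_m)
  (h : {vspace 'cV[F]_n}) (lam : 'cV[F]_n -> F) :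
  is_lie br -> semisimple br -> is_rep br rho -> cartan br h ->
  is_weight rho h lam ->
  (exists Ha : 'cV[F]_n, is_coroot br h Ha /\
     exists k : int, k != 0 /\ lam Ha = (2 * k)%:~R) ->
  forall (w : 'cV[F]_m) (H : 'cV[F]_n),
    weight_space rho h lam w -> H \in h ->
    in_overshear_submod br rho (tens w H).
Proof.
move=> hlie _ hrep _ _ [Ha [[al [_ hHa [E [Fa [_ _ hHE hHF hEF]]]]] [k [k0 hk]]]].
move=> w H hw hH S hS1 hS2.
have wHa : rho Ha *m w = (2 * k)%:~R *: w by rewrite hw // hk.
have key : tens w Ha \in S.
  case: k k0 hk wHa => [[|k']|k'] k0 _ wHa; first by [].
    apply: (sl2_main hlie hrep hHE hHF hEF hS1 hS2 (k := k')).
    by rewrite wHa -PoszM.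
  rewrite -memvN -tensNr.
  have hHE' : br (- Ha) Fa = 2%:R *: Fa by rewrite (brNl hlie) hHF opprK.
  have hHF' : br (- Ha) E = - (2%:R *: E) by rewrite (brNl hlie) hHE.
  have hEF' : br Fa E = - Ha by rewrite (br_anti hlie) hEF.
  apply: (sl2_main hlie hrep hHE' hHF' hEF' hS1 hS2 (k := k')).
  rewrite (rhoN hrep) mulNmx wHa -scaleNr; congr (_ *: _).
  by rewrite NegzE mulrN -PoszM rmorphN opprK.
have d : ((2 * k)%:~R : F) != 0 by rewrite intr_eq0 mulf_neq0.
set c := lam H / (2 * k)%:~R.
have os : tens w (H - c *: Ha) \in S.
  apply: hS1; rewrite /overshear expr2 -mulmxE -mulmxA.
  suff -> : rho (H - c *: Ha) *m w = 0 by rewrite mulmx0.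
  rewrite (rhoB hrep) (rhoZ hrep) mulmxBl -scalemxAl wHa hw // scalerA.
  by rewrite /c divfK // subrr.
by rewrite -(subrK (c *: Ha) H) tensDr tensZr memvD // memvZ.
Qed.
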